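(* Let $n\ge 5$ and $k=2$. There exists a finite field $\mathbb{F}$ and an exact scalar linear adaptive regenerating code over $\mathbb{F}$ with $n$ nodes and $k=2$ that supports both $t=1$ and $t=2$ simultaneous failures. Concretely, for the code of $n=d+2$ nodes (with $\alpha=d=n-2$) described below, all three of the following hold: (i) any $2$ nodes recover the file; (ii) any $2$ simultaneously failed nodes can be exactly regenerated by an exact scalar coordinated repair using the $d=n-2$ surviving nodes as helpers; (iii) any single failed node can be exactly regenerated by an exact scalar repair in which the newcomer downloads exactly one symbol, a linear combination of the helper's stored symbols, from each of the $n-1$ surviving nodes, and then computes the lost $\alpha$ symbols as a linear function of these $n-1$ symbols. The code is the following. Let $\mathbb{F}$ be a finite field with a primitive element $\omega$ and $|\mathbb{F}|-1\ge\alpha$. Node 1 stores $\vec a=(a_1,\dots,a_\alpha)^t$ and node 2 stores $\vec b=(b_1,\dots,b_\alpha)^t$. For $i\in\{0,\dots,\alpha-1\}$, node $i$ among the redundancy nodes stores the vector whose $j$-th coordinate is $a_j+\omega^{(i+j-1)\bmod\alpha}b_j$.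
   Context: Fix integers $n,k,d,t$ with $k\le d$, $t\ge 1$, $d+t\le n$, and a finite field $\mathbb{F}$. A file consists of $\mathcal{M}=k(d-k+t)$ symbols of $\mathbb{F}$. A scalar linear minimum storage coordinated regenerating (MSCR) code with parameters $(n,k,d,t)$ stores at each of $n$ nodes $\alpha=d-k+t$ symbols. Each stored symbol is an $\mathbb{F}$-linear combination of the file symbols. The code must have the MDS property: the file can be recovered from the contents of any $k$ nodes. An exact scalar coordinated repair of a set of $t$ failed nodes proceeds in three steps, with $t$ newcomer nodes, one replacing each failed node: (collect) each newcomer contacts $d$ surviving nodes (helpers) and receives from each helper exactly one symbol, namely an $\mathbb{F}$-linear combination of that helper's $\alpha$ stored symbols; the combination may depend on which newcomer it is sent to; (coordinate) each newcomer sends to each of the other $t-1$ newcomers exactly one symbol, namely an $\mathbb{F}$-linear combination of the $d$ symbols it collected; (store) each newcomer computes, as an $\mathbb{F}$-linear function of the $d+t-1$ symbols it holds, exactly the $\alpha$ symbols that were stored by the failed node it replaces. An exact scalar linear adaptive regenerating code with $n$ nodes and parameter $k$ stores a file of $k(n-k)$ symbols as $\alpha=n-k$ symbols per node and has the MDS property. For each number $t$ of simultaneous failures it supports, any $t$ failed nodes can be exactly repaired by an exact scalar coordinated repair with $d=n-t$ helpers, namely all surviving nodes. For $t=1$ there is no coordination step. Note that $\alpha=d-k+t$ for every such $t$. *)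

(* Defs.v *)
From HB Require Import structures.
From mathcomp Require Import all_boot all_order all_algebra all_field.
Set Implicit Arguments. Unset Strict Implicit. Unset Printing Implicit Defensive.
Import GRing.Theory.
Local Open Scope ring_scope.

(* A scalar linear code with n nodes, file of m symbols, alpha symbols per node:
   node i stores  x *m G i  for the file (row vector) x : 'rV_m. *)

Definition mds_property (F : fieldType) (n m alpha : nat)
    (G : 'I_n -> 'M[F]_(m, alpha)) (k : nat) : Prop :=
  forall S : {set 'I_n}, #|S| = k ->
  forall x y : 'rV[F]_m, (forall i, i \in S -> x *m G i = y *m G i) -> x = y.

Definition helper_sym (F : fieldType) (n m alpha : nat)
    (G : 'I_n -> 'M[F]_(m, alpha)) (c : 'I_n -> 'I_n -> 'cV[F]_alpha)
    (x : 'rV[F]_m) (f h : 'I_n) : F :=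
  (x *m G h *m c f h) ord0 ord0.

(* Exact scalar coordinated repair of the failed set T, with helpers = all
   surviving nodes (d = n - #|T|):
   - collect: newcomer f receives helper_sym from every h not in T;
   - coordinate: newcomer g sends to newcomer f (f <> g in T) the symbol
       \sum_(h not in T) e g f h * helper_sym g h;
   - store: newcomer f computes x *m G f as a linear function (coefficient
       rows r f h, q f g) of its d + #|T| - 1 symbols.
   For #|T| = 1 the coordination sum is empty: ordinary exact repair. *)
Definition coord_repairable (F : fieldType) (n m alpha : nat)
    (G : 'I_n -> 'M[F]_(m, alpha)) (T : {set 'I_n}) : Prop :=
  exists (c : 'I_n -> 'I_n -> 'cV[F]_alpha)
         (e : 'I_n -> 'I_n -> 'I_n -> F)
         (r : 'I_n -> 'I_n -> 'rV[F]_alpha)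
         (q : 'I_n -> 'I_n -> 'rV[F]_alpha),
  forall (x : 'rV[F]_m) (f : 'I_n), f \in T ->
    x *m G f =
      \sum_(h in ~: T) helper_sym G c x f h *: r f h
    + \sum_(g in T :\ f)
        (\sum_(h in ~: T) e g f h * helper_sym G c x g h) *: q f g.

(* The concrete code of the paper, alpha = n - 2, file x = (a | b) with
   a, b : 'rV_alpha.  Node 0 stores a, node 1 stores b, node 2 + i
   (i = 0..alpha-1) stores (a_j + w^((i+j) mod alpha) b_j)_j  (0-based j). *)
Definition adrc_node (F : fieldType) (n : nat) (w : F) (i : 'I_n)
    : 'M[F]_((n - 2) + (n - 2), n - 2) :=
  if (i : nat) == 0%N then col_mx 1%:M 0
  else if (i : nat) == 1%N then col_mx 0 1%:M
  else col_mx 1%:M (diag_mx (\row_(j < n - 2) w ^+ (((i - 2) + j) %% (n - 2)))).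

(* Main.v *)
Require Import Defs.
From HB Require Import structures.
From mathcomp Require Import all_boot all_order all_algebra all_field.
From mathcomp Require Import ring zify.
From mathcomp Require cyclic.
Import GRing.Theory.
Local Open Scope ring_scope.
Set Implicit Arguments. Unset Strict Implicit. Unset Printing Implicit Defensive.

Section Span.
Variables (F : fieldType) (n m : nat).
Definition inspan (H : {set 'I_n}) (Phi : 'I_n -> 'I_m -> F) (v : 'I_m -> F) :=
  exists rho : 'I_n -> F, forall k, v k = \sum_(h in H) rho h * Phi h k.
Definition full H Phi := forall v, inspan H Phi v.

Variables (H : {set 'I_n}) (Phi : 'I_n -> 'I_m -> F).

Lemma inspan_ext v v' : (forall k, v k = v' k) -> inspan H Phi v' -> inspan H Phi v.
Proof. by move=> e [rho Hr]; exists rho => k; rewrite e Hr. Qed.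

Lemma inspan0 : inspan H Phi (fun _ => 0).
Proof. by exists (fun _ => 0) => k; rewrite big1 // => h _; rewrite mul0r. Qed.

Lemma inspanD v v' : inspan H Phi v -> inspan H Phi v' ->
  inspan H Phi (fun k => v k + v' k).
Proof.
move=> [r1 H1] [r2 H2]; exists (fun h => r1 h + r2 h) => k.
by rewrite H1 H2 -big_split; apply: eq_bigr => h _; rewrite mulrDl.
Qed.

Lemma inspanZ a v : inspan H Phi v -> inspan H Phi (fun k => a * v k).
Proof.
move=> [r1 H1]; exists (fun h => a * r1 h) => k.
by rewrite H1 mulr_sumr; apply: eq_bigr => h _; rewrite mulrA.
Qed.

Lemma inspanB v v' : inspan H Phi v -> inspan H Phi v' ->
  inspan H Phi (fun k => v k - v' k).
Proof.
move=> h1 h2; eapply inspan_ext; last exact: (inspanD h1 (inspanZ (-1) h2)).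
by move=> k /=; rewrite mulN1r.
Qed.

Lemma inspan_gen h : h \in H -> inspan H Phi (Phi h).
Proof.
move=> hH; exists (fun h' => (h' == h)%:R) => k.
rewrite (bigD1 h) //= eqxx mul1r big1 ?addr0 // => h' /andP[_ /negPf->].
by rewrite mul0r.
Qed.

Lemma inspan_sum (I : finType) (A : {pred I}) (v : I -> 'I_m -> F) :
  (forall i, i \in A -> inspan H Phi (v i)) ->
  inspan H Phi (fun k => \sum_(i in A) v i k).
Proof.
move=> hv.
have hv' : forall i, exists rho : 'I_n -> F,
    i \in A -> forall k, v i k = \sum_(h in H) rho h * Phi h k.
  move=> i; case: (boolP (i \in A)) => iA; last by exists (fun _ => 0).
  by have [rho Hr] := hv i iA; exists rho.
have [rho Hr] := fin_all_exists hv'.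
exists (fun h => \sum_(i in A) rho i h) => k.
rewrite (eq_bigr (fun i => \sum_(h in H) rho i h * Phi h k)); last first.
  by move=> i iA; rewrite Hr.
rewrite exchange_big; apply: eq_bigr => h _; by rewrite mulr_suml.
Qed.

Lemma full_delta : (forall k0, inspan H Phi (fun k => (k == k0)%:R)) -> full H Phi.
Proof.
move=> hd v.
apply: (@inspan_ext _ (fun k => \sum_(k0 in 'I_m) v k0 * (k == k0)%:R)).
  move=> k; rewrite (bigD1 k) //= eqxx mulr1 big1 ?addr0 // => k0 /negPf.
  by rewrite eq_sym => ->; rewrite mulr0.
by apply: inspan_sum => k0 _; apply: inspanZ.
Qed.

End Span.

Lemma full_sub (F : fieldType) n m (H H' : {set 'I_n}) (Phi Psi : 'I_n -> 'I_m -> F) :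
  full H' Psi -> (forall h, h \in H' -> inspan H Phi (Psi h)) -> full H Phi.
Proof.
move=> fP hP v; have [rho Hr] := fP v.
eapply inspan_ext; first exact: Hr.
apply: inspan_sum => h hH; exact: inspanZ _ (hP h hH).
Qed.

Lemma full_diag (F : fieldType) n m (H : {set 'I_n}) (Phi : 'I_n -> 'I_m -> F) (D : 'I_m -> F) :
  full H Phi -> (forall k, D k != 0) -> full H (fun h k => D k * Phi h k).
Proof.
move=> fP hD v; have [rho Hr] := fP (fun k => v k / D k).
exists rho => k; have := Hr k; move/(congr1 (fun x => D k * x)).
rewrite mulrC divfK // => ->; rewrite mulr_sumr; apply: eq_bigr => h _.
by rewrite mulrCA.
Qed.

Section Repair.
Variables (F : fieldType) (n m : nat) (pa pb : 'I_n -> 'I_m -> F).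
Definition Gm (h : 'I_n) : 'M[F]_(m + m, m) :=
  col_mx (diag_mx (\row_k pa h k)) (diag_mx (\row_k pb h k)).

Lemma Gmul_u h (c : 'cV[F]_m) k : (Gm h *m c) (lshift m k) 0 = c k 0 * pa h k.
Proof. by rewrite /Gm mul_col_mx col_mxEu mul_diag_mx !mxE mulrC. Qed.
Lemma Gmul_d h (c : 'cV[F]_m) k : (Gm h *m c) (rshift m k) 0 = c k 0 * pb h k.
Proof. by rewrite /Gm mul_col_mx col_mxEd mul_diag_mx !mxE mulrC. Qed.
Lemma Gcol_u h j k : (col j (Gm h)) (lshift m k) 0 = (k == j)%:R * pa h k.
Proof. by rewrite mxE col_mxEu !mxE mulr_natl. Qed.
Lemma Gcol_d h j k : (col j (Gm h)) (rshift m k) 0 = (k == j)%:R * pb h k.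
Proof. by rewrite mxE col_mxEd !mxE mulr_natl. Qed.

Lemma cV_eq (u v : 'cV[F]_(m + m)) :
  (forall k, u (lshift m k) 0 = v (lshift m k) 0) ->
  (forall k, u (rshift m k) 0 = v (rshift m k) 0) -> u = v.
Proof.
move=> hu hv; apply/matrixP => i j; rewrite ord1.
by rewrite -(splitK i); case: (split i) => k /=.
Qed.

Lemma repair_of (T : {set 'I_n}) c e :
  (forall f j, f \in T -> exists (rho kap : 'I_n -> F),
     col j (Gm f) = \sum_(h in ~: T) rho h *: (Gm h *m c f h)
                 + \sum_(g in T :\ f) kap g *: \sum_(h in ~: T) e g f h *: (Gm h *m c g h)) ->
  coord_repairable Gm T.
Proof.
move=> hyp.
have hyp' : forall f j, exists rk : ('I_n -> F) * ('I_n -> F), f \in T ->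
     col j (Gm f) = \sum_(h in ~: T) rk.1 h *: (Gm h *m c f h)
                 + \sum_(g in T :\ f) rk.2 g *: \sum_(h in ~: T) e g f h *: (Gm h *m c g h).
  move=> f j; case: (boolP (f \in T)) => fT; last by exists ((fun _ : 'I_n => 0 : F), (fun _ : 'I_n => 0 : F)).
  by have [rho [kap E]] := hyp f j fT; exists (rho, kap).
have hyp2 : forall f, exists R : 'I_m -> ('I_n -> F) * ('I_n -> F), forall j, f \in T ->
     col j (Gm f) = \sum_(h in ~: T) (R j).1 h *: (Gm h *m c f h)
                 + \sum_(g in T :\ f) (R j).2 g *: \sum_(h in ~: T) e g f h *: (Gm h *m c g h).
  by move=> f; have [R HR] := fin_all_exists (hyp' f); exists R.
have [R HR] := fin_all_exists hyp2.
exists c, e, (fun f h => \row_j (R f j).1 h), (fun f g => \row_j (R f j).2 g).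
move=> x f fT; apply/rowP => j.
have E := HR f j fT.
have -> : (x *m Gm f) 0 j = (x *m col j (Gm f)) ord0 ord0.
  by rewrite !mxE; apply: eq_bigr => i _; rewrite !mxE.
rewrite E mulmxDr !mulmx_sumr mxE !summxE [RHS]mxE !summxE; congr (_ + _).
  apply: eq_bigr => h _; rewrite -scalemxAr [LHS]mxE [RHS]mxE /helper_sym mulmxA mulrC.
  by rewrite mxE; congr (_ * _); rewrite mxE.
apply: eq_bigr => g _; rewrite -scalemxAr mulmx_sumr [LHS]mxE summxE.
rewrite mxE mxE mulrC; congr (_ * _).
apply: eq_bigr => h _; rewrite -scalemxAr mxE /helper_sym mulmxA.
by [].
Qed.

Definition dt u v k := pa u k * pb v k - pb u k * pa v k.
Hypothesis dtP : forall u v k, u != v -> dt u v k != 0.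

Lemma dec_pa f g h k : f != g ->
  pa h k = (dt h g k / dt f g k) * pa f k + (dt f h k / dt f g k) * pa g k.
Proof. move=> fg; have := dtP k fg; rewrite /dt => H; field; exact: H. Qed.
Lemma dec_pb f g h k : f != g ->
  pb h k = (dt h g k / dt f g k) * pb f k + (dt f h k / dt f g k) * pb g k.
Proof. move=> fg; have := dtP k fg; rewrite /dt => H; field; exact: H. Qed.

Lemma dec_paA f g : f != g -> forall h k,
  pa h k = (dt h g k / dt f g k) * pa f k + (dt f h k / dt f g k) * pa g k.
Proof. by move=> fg h k; apply: dec_pa. Qed.
Lemma dec_pbA f g : f != g -> forall h k,
  pb h k = (dt h g k / dt f g k) * pb f k + (dt f h k / dt f g k) * pb g k.
Proof. by move=> fg h k; apply: dec_pb. Qed.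

Lemma sum_lin (A : {set 'I_n}) (w a b : 'I_n -> F) x y :
  \sum_(h in A) w h * (a h * x + b h * y) =
  (\sum_(h in A) w h * a h) * x + (\sum_(h in A) w h * b h) * y.
Proof.
rewrite !mulr_suml -big_split; apply: eq_bigr => h _; by rewrite mulrDr !mulrA.
Qed.


Lemma sum_nu (A : {set 'I_n}) p q (Z : 'I_n -> F) : p \in A -> q \in A -> p != q ->
  \sum_(h in A) ((h == p)%:R - (h == q)%:R) * Z h = Z p - Z q.
Proof.
move=> pA qA pq.
rewrite (bigD1 p) //= (bigD1 q) /=; last by rewrite qA eq_sym.
rewrite eqxx (negPf pq) eq_sym (negPf pq) big1 ?addr0.
  by rewrite subr0 mul1r sub0r eqxx mulNr mul1r. 
by move=> h /andP[/andP[_ /negPf->] /negPf->]; rewrite subr0 mul0r.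
Qed.

Lemma sum_nu1 (A : {set 'I_n}) p q : p \in A -> q \in A -> p != q ->
  \sum_(h in A) ((h == p)%:R - (h == q)%:R) = 0 :> F.
Proof.
move=> pA qA pq.
transitivity (\sum_(h in A) ((h == p)%:R - (h == q)%:R) * (1 : F)).
  by apply: eq_bigr => h _; rewrite mulr1.
by rewrite (sum_nu (fun _ => 1)) // subrr.
Qed.

Section Pair.
Variables f g : 'I_n.
Hypothesis fg : f != g.
Variables p q : 'I_n.
Hypotheses (pH : p \in ~: [set f; g]) (qH : q \in ~: [set f; g]) (pq : p != q).

Definition Xv h k := dt f h k / dt h g k.
Definition Yv h k := dt h g k / dt f h k.
Definition rp k := Yv p k - Yv q k.
Definition cf h : 'cV[F]_m := \col_k (dt f g k / dt f h k).
Definition cg h : 'cV[F]_m := \col_k (rp k * (dt f g k / dt h g k)).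
Definition nu h : F := (h == p)%:R - (h == q)%:R.

Lemma inH h : h \in ~: [set f; g] -> (h != f) && (h != g).
Proof. by rewrite !inE negb_or. Qed.

Lemma rp_neq0 k : rp k != 0.
Proof.
have /andP[pf pg] := inH pH; have /andP[qf qg] := inH qH.
have h1 := dtP k (fg); have h2 := dtP k pq.
have h3 : dt f p k != 0 by apply: dtP; rewrite eq_sym.
have h4 : dt f q k != 0 by apply: dtP; rewrite eq_sym.
have -> : rp k = (dt f g k * dt p q k) / (dt f p k * dt f q k).
  rewrite /rp /Yv. move: h3 h4; rewrite /dt => h3 h4. field.
  by rewrite h3 h4.
by rewrite mulf_neq0 // ?invr_eq0 mulf_neq0.
Qed.

Section Dec.
Variable P : 'I_n -> 'I_m -> F.
Hypothesis Pdec : forall h k,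
  P h k = (dt h g k / dt f g k) * P f k + (dt f h k / dt f g k) * P g k.

Lemma L1 h k : h != f -> cf h k 0 * P h k = Yv h k * P f k + 1 * P g k.
Proof.
move=> hf; have h1 := dtP k fg; have h2 : dt f h k != 0 by apply: dtP; rewrite eq_sym.
rewrite mxE Pdec /Yv; move: h1 h2; set a := dt f h k; set b := dt f g k => h1 h2.
by field; rewrite h1 h2.
Qed.

Lemma L2 h k : h != g -> cg h k 0 * P h k = rp k * P f k + (rp k * Xv h k) * P g k.
Proof.
move=> hg; have h1 := dtP k fg; have h2 : dt h g k != 0 by apply: dtP.
rewrite mxE Pdec /Xv; move: h1 h2; set a := dt h g k; set b := dt f g k => h1 h2.
by field; rewrite h1 h2.
Qed.

Lemma scal_f (rho mu : 'I_n -> F) j k :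
  (forall k, (k == j)%:R = \sum_(h in ~: [set f; g]) rho h * Yv h k) ->
  (forall k, (rp k)^-1 = \sum_(h in ~: [set f; g]) mu h * Xv h k) ->
  (k == j)%:R * P f k =
  \sum_(h in ~: [set f; g])
      (rho h + (\sum_(h in ~: [set f; g]) rho h) * (\sum_(h in ~: [set f; g]) mu h) * nu h)
        * (cf h k 0 * P h k)
  + (- \sum_(h in ~: [set f; g]) rho h) *
      \sum_(h in ~: [set f; g]) mu h * (cg h k 0 * P h k).
Proof.
move=> Hrho Hmu.
set s := \sum_(h in _) rho h; set sg := \sum_(h in _) mu h.
rewrite (eq_bigr (fun h => (rho h + s * sg * nu h) * (Yv h k * P f k + 1 * P g k))); last first.
  by move=> h /inH /andP[hf _]; rewrite L1.
rewrite [X in _ + _ * X](eq_bigr (fun h => mu h * (rp k * P f k + (rp k * Xv h k) * P g k))); last first.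
  by move=> h /inH /andP[_ hg]; rewrite L2.
rewrite !sum_lin.
have E1 : \sum_(h in ~: [set f; g]) (rho h + s * sg * nu h) * Yv h k = (k == j)%:R + s * sg * rp k.
  rewrite (eq_bigr (fun h => rho h * Yv h k + s * sg * (nu h * Yv h k))); last first.
    by move=> h _; rewrite mulrDl mulrA.
  by rewrite big_split /= -mulr_sumr -Hrho /nu sum_nu.
have E2 : \sum_(h in ~: [set f; g]) (rho h + s * sg * nu h) * 1 = s.
  rewrite (eq_bigr (fun h => rho h + s * sg * nu h)); last by move=> h _; rewrite mulr1.
  by rewrite big_split /= -mulr_sumr /nu sum_nu1 // mulr0 addr0.
have E3 : \sum_(h in ~: [set f; g]) mu h * rp k = sg * rp k by rewrite mulr_suml.
have E4 : \sum_(h in ~: [set f; g]) mu h * (rp k * Xv h k) = rp k * (rp k)^-1.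
  rewrite Hmu mulr_sumr; apply: eq_bigr => h _; by rewrite mulrCA.
rewrite E1 E2 E3 E4 divff ?rp_neq0 //.
ring.
Qed.

Lemma scal_g (rho : 'I_n -> F) j k :
  (forall k, (k == j)%:R / rp k = \sum_(h in ~: [set f; g]) rho h * Xv h k) ->
  (k == j)%:R * P g k =
  \sum_(h in ~: [set f; g]) rho h * (cg h k 0 * P h k)
  + (- \sum_(h in ~: [set f; g]) rho h) *
      \sum_(h in ~: [set f; g]) nu h * (cf h k 0 * P h k).
Proof.
move=> Hrho.
set s := \sum_(h in _) rho h.
rewrite (eq_bigr (fun h => rho h * (rp k * P f k + (rp k * Xv h k) * P g k))); last first.
  by move=> h /inH /andP[_ hg]; rewrite L2.
rewrite [X in _ + _ * X](eq_bigr (fun h => nu h * (Yv h k * P f k + 1 * P g k))); last first.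
  by move=> h /inH /andP[hf _]; rewrite L1.
rewrite !sum_lin.
have E1 : \sum_(h in ~: [set f; g]) rho h * rp k = s * rp k by rewrite mulr_suml.
have E2 : \sum_(h in ~: [set f; g]) rho h * (rp k * Xv h k) = rp k * ((k == j)%:R / rp k).
  rewrite Hrho mulr_sumr; apply: eq_bigr => h _; by rewrite mulrCA.
have E3 : \sum_(h in ~: [set f; g]) nu h * Yv h k = rp k by rewrite /nu sum_nu.
have E4 : \sum_(h in ~: [set f; g]) nu h * 1 = 0.
  rewrite (eq_bigr (fun h => nu h)); last by move=> h _; rewrite mulr1.
  by rewrite /nu sum_nu1.
rewrite E1 E2 E3 E4 mulrCA divff ?rp_neq0 //.
ring.
Qed.

Lemma scal_1 (rho : 'I_n -> F) j k :
  (forall k, (k == j)%:R = \sum_(h in ~: [set f; g]) rho h * Yv h k) ->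
  (k == j)%:R * P f k =
  (- \sum_(h in ~: [set f; g]) rho h) * (1 * P g k)
  + \sum_(h in ~: [set f; g]) rho h * (cf h k 0 * P h k).
Proof.
move=> Hrho.
rewrite [X in _ + X](eq_bigr (fun h => rho h * (Yv h k * P f k + 1 * P g k))); last first.
  by move=> h /inH /andP[hf _]; rewrite L1.
rewrite sum_lin -Hrho.
have -> : \sum_(h in ~: [set f; g]) rho h * 1 = \sum_(h in ~: [set f; g]) rho h.
  by apply: eq_bigr => h _; rewrite mulr1.
ring.
Qed.
End Dec.
End Pair.

Lemma eD a b (u v : 'M[F]_(a, b)) i j : (u + v) i j = u i j + v i j.
Proof. by rewrite mxE. Qed.
Lemma eZ a b c (u : 'M[F]_(a, b)) i j : (c *: u) i j = c * u i j.
Proof. by rewrite mxE. Qed.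
Lemma sumG_u (A : {set 'I_n}) (w : 'I_n -> F) (c : 'I_n -> 'cV[F]_m) k :
  (\sum_(h in A) w h *: (Gm h *m c h)) (lshift m k) 0 = \sum_(h in A) w h * (c h k 0 * pa h k).
Proof. by rewrite summxE; apply: eq_bigr => h _; rewrite eZ Gmul_u. Qed.
Lemma sumG_d (A : {set 'I_n}) (w : 'I_n -> F) (c : 'I_n -> 'cV[F]_m) k :
  (\sum_(h in A) w h *: (Gm h *m c h)) (rshift m k) 0 = \sum_(h in A) w h * (c h k 0 * pb h k).
Proof. by rewrite summxE; apply: eq_bigr => h _; rewrite eZ Gmul_d. Qed.

Lemma set2D1l (f g : 'I_n) : f != g -> [set f; g] :\ f = [set g].
Proof.
move=> fg; apply/setP => x; rewrite !inE.
by case: (x =P f) => [->|_] /=; rewrite ?(negPf fg) ?andbF ?andbT.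
Qed.
Lemma set2D1r (f g : 'I_n) : f != g -> [set f; g] :\ g = [set f].
Proof.
move=> fg; apply/setP => x; rewrite !inE.
case: (x =P g) => [->|_] /=; first by rewrite eq_sym (negPf fg).
by rewrite orbF.
Qed.

Lemma pair_repair f g p q : f != g ->
  p \in ~: [set f; g] -> q \in ~: [set f; g] -> p != q ->
  full (~: [set f; g]) (Xv f g) -> full (~: [set f; g]) (Yv f g) ->
  coord_repairable Gm [set f; g].
Proof.
move=> fg pH qH pq fX fY.
have gf : g != f by rewrite eq_sym.
have [mu Hmu] := fX (fun k => (rp f g p q k)^-1).
pose c x h := if x == f then cf f g h else cg f g p q h.
pose e x (y : 'I_n) h := if x == g then mu h else nu p q h.
apply: (repair_of (c:=c) (e:=e)) => x j; rewrite !inE => /orP[/eqP-> | /eqP->].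
  have [rho Hrho] := fY (fun k => (k == j)%:R).
  set s := \sum_(h in ~: [set f; g]) rho h.
  set sg := \sum_(h in ~: [set f; g]) mu h.
  exists (fun h => rho h + s * sg * nu p q h), (fun _ => - s).
  rewrite set2D1l // big_set1 /c /e !eqxx (negPf gf).
  apply: cV_eq => k.
    rewrite Gcol_u eD sumG_u eZ sumG_u.
    exact: (scal_f fg pH qH pq (dec_paA fg) k Hrho Hmu).
  rewrite Gcol_d eD sumG_d eZ sumG_d.
  exact: (scal_f fg pH qH pq (dec_pbA fg) k Hrho Hmu).
have [rho Hrho] := fX (fun k => (k == j)%:R / rp f g p q k).
set s := \sum_(h in ~: [set f; g]) rho h.
exists rho, (fun _ => - s).
rewrite set2D1r // big_set1 /c /e !eqxx (negPf gf) (negPf fg).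
apply: cV_eq => k.
  rewrite Gcol_u eD sumG_u eZ sumG_u.
  exact: (scal_g fg pH qH pq (dec_paA fg) k Hrho).
rewrite Gcol_d eD sumG_d eZ sumG_d.
exact: (scal_g fg pH qH pq (dec_pbA fg) k Hrho).
Qed.

Lemma single_repair f g : f != g ->
  full (~: [set f; g]) (Yv f g) -> coord_repairable Gm [set f].
Proof.
move=> fg fY.
pose c (x : 'I_n) h := if h == g then (\col_(k < m) (1 : F)) else cf f g h.
pose e (x y h : 'I_n) := (0 : F).
apply: (repair_of (c:=c) (e:=e)) => x j; rewrite !inE => /eqP->.
have [rho Hrho] := fY (fun k => (k == j)%:R).
set s := \sum_(h in ~: [set f; g]) rho h.
exists (fun h => if h == g then - s else rho h), (fun _ => 0).
rewrite setDv big_set0 addr0.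
have gT : g \in ~: [set f] by rewrite !inE eq_sym.
rewrite (bigD1 g) //= eqxx.
rewrite (eq_bigl (fun h => h \in ~: [set f; g])); last first.
  by move=> h; rewrite !inE negb_or.
rewrite (eq_bigr (fun h => rho h *: (Gm h *m cf f g h))); last first.
  by move=> h /inH /andP[_ /negPf hg]; rewrite /c hg.
apply: cV_eq => k.
  rewrite Gcol_u eD sumG_u eZ Gmul_u /c eqxx mxE.
  exact: (scal_1 fg (dec_paA fg) k Hrho).
rewrite Gcol_d eD sumG_d eZ Gmul_d /c eqxx mxE.
exact: (scal_1 fg (dec_pbA fg) k Hrho).
Qed.


Lemma Gm_row (x : 'rV[F]_(m + m)) h k :
  (x *m Gm h) 0 k = lsubmx x 0 k * pa h k + rsubmx x 0 k * pb h k.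
Proof. by rewrite -{1}(hsubmxK x) /Gm mul_row_col !mul_mx_diag !mxE. Qed.

Lemma mds_Gm : mds_property Gm 2.
Proof.
move=> S /eqP /cards2P [u [v [uv ->]]] x y hxy.
have hu := hxy u (set21 u v); have hv := hxy v (set22 u v).
rewrite -(hsubmxK x) -(hsubmxK y); congr row_mx; apply/rowP => k.
  have E1 : (x *m Gm u) 0 k = (y *m Gm u) 0 k by rewrite hu.
  have E2 : (x *m Gm v) 0 k = (y *m Gm v) 0 k by rewrite hv.
  move: E1 E2; rewrite !Gm_row => E1 E2.
  have : (lsubmx x 0 k - lsubmx y 0 k) * dt u v k = 0.
    rewrite (_ : _ * _ = pb v k * ((lsubmx x 0 k * pa u k + rsubmx x 0 k * pb u k)
              - (lsubmx y 0 k * pa u k + rsubmx y 0 k * pb u k))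
           - pb u k * ((lsubmx x 0 k * pa v k + rsubmx x 0 k * pb v k)
              - (lsubmx y 0 k * pa v k + rsubmx y 0 k * pb v k))); last by rewrite /dt; ring.
    by rewrite E1 E2 !subrr !mulr0 subrr.
  by move/eqP; rewrite mulf_eq0 (negPf (dtP k uv)) orbF subr_eq0 => /eqP.
have E1 : (x *m Gm u) 0 k = (y *m Gm u) 0 k by rewrite hu.
have E2 : (x *m Gm v) 0 k = (y *m Gm v) 0 k by rewrite hv.
move: E1 E2; rewrite !Gm_row => E1 E2.
have : (rsubmx x 0 k - rsubmx y 0 k) * dt u v k = 0.
  rewrite (_ : _ * _ = pa u k * ((lsubmx x 0 k * pa v k + rsubmx x 0 k * pb v k)
              - (lsubmx y 0 k * pa v k + rsubmx y 0 k * pb v k))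
           - pa v k * ((lsubmx x 0 k * pa u k + rsubmx x 0 k * pb u k)
              - (lsubmx y 0 k * pa u k + rsubmx y 0 k * pb u k))); last by rewrite /dt; ring.
  by rewrite E1 E2 !subrr !mulr0 subrr.
by move/eqP; rewrite mulf_eq0 (negPf (dtP k uv)) orbF subr_eq0 => /eqP.
Qed.

End Repair.

Lemma full_ext (F : fieldType) n m (H : {set 'I_n}) (Phi Psi : 'I_n -> 'I_m -> F) :
  (forall h k, h \in H -> Phi h k = Psi h k) -> full H Phi -> full H Psi.
Proof.
move=> e fP v; have [rho Hr] := fP v; exists rho => k; rewrite Hr.
by apply: eq_bigr => h hH; rewrite e.
Qed.

Lemma cr_ext (F : fieldType) n m al (G1 G2 : 'I_n -> 'M[F]_(m, al)) (T : {set 'I_n}) :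
  (forall i, G1 i = G2 i) -> coord_repairable G2 T -> coord_repairable G1 T.
Proof.
move=> E [c [e [r [q H]]]]; exists c, e, r, q => x f fT; rewrite E H //.
congr (_ + _); first by apply: eq_bigr => h _; rewrite /helper_sym E.
apply: eq_bigr => g _; congr (_ *: _); apply: eq_bigr => h _.
by rewrite /helper_sym E.
Qed.

Section B1.
Variables (F : fieldType) (n : nat) (z : F).
Local Notation a := (n - 2)%N.
Hypotheses (a0 : (0 < a)%N) (hz : z ^+ a != 1).

Definition Rset : {set 'I_n} := [set i : 'I_n | (2 <= i)%N].
Definition Phi1 (i : 'I_n) (k : 'I_a) : F := z ^+ ((i - 2 + k) %% a).

Lemma B1 : full Rset Phi1.
Proof.
apply: full_delta => k0.
pose io := (a.-1 - k0)%N.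
have ih : (io + 2 < n)%N by rewrite /io; lia.
have ih' : ((io + 1) %% a + 2 < n)%N by have := ltn_pmod (io + 1) a0; lia.
pose i : 'I_n := Ordinal ih.
pose i' : 'I_n := Ordinal ih'.
have iv : (i : nat) = (io + 2)%N by [].
have i'v : (i' : nat) = ((io + 1) %% a + 2)%N by [].
have iR : i \in Rset by rewrite inE iv; lia.
have i'R : i' \in Rset by rewrite inE i'v; lia.
have h1 : 1 - z ^+ a != 0 by rewrite subr_eq0 eq_sym.
apply: (@inspan_ext _ _ _ _ _ _ (fun k => (1 - z ^+ a)^-1 * (Phi1 i' k - z * Phi1 i k))); last first.
  by apply: inspanZ; apply: inspanB; [apply: inspan_gen | apply: inspanZ; apply: inspan_gen].
move=> k; rewrite /Phi1 iv i'v.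
have -> : (io + 2 - 2 = io)%N by lia.
have -> : ((io + 1) %% a + 2 - 2 = (io + 1) %% a)%N by lia.
rewrite modnDml.
have k0a := ltn_ord k0; have ka := ltn_ord k.
case: (eqVneq k k0) => [->|kk0].
  have -> : (io + k0 = a.-1)%N by rewrite /io; lia.
  have -> : (io + 1 + k0 = a)%N by rewrite /io; lia.
  rewrite modnn modn_small; last by lia.
  by rewrite -exprS prednK // expr0 mulVf.
have ne : ((io + k) %% a != a.-1)%N.
  apply/negP => /eqP e1.
  have e2 : ((io + k) %% a = (io + k0) %% a)%N.
    by rewrite e1 modn_small; rewrite /io; lia.
  move: e2 => /eqP; rewrite eqn_modDl !modn_small // => /eqP /val_inj e3.
  by rewrite e3 eqxx in kk0.
have lt := ltn_pmod (io + k) a0.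
have -> : (io + 1 + k = (io + k) %/ a * a + ((io + k) %% a + 1))%N.
  have := divn_eq (io + k) a; lia.
rewrite modnMDl modn_small; last by lia.
by rewrite addn1 exprS subrr mulr0.
Qed.
End B1.

Section Code.
Variables (F : fieldType) (n : nat) (w : F).
Local Notation a := (n - 2)%N.
Hypotheses (a2 : (2 <= a)%N) (w0 : w != 0)
  (winj : forall e e', (e <= a)%N -> (e' <= a)%N -> w ^+ e = w ^+ e' -> e = e').

Lemma n0p : (0 < n)%N. Proof. lia. Qed.
Lemma n1p : (1 < n)%N. Proof. lia. Qed.
Definition n0 : 'I_n := Ordinal n0p.
Definition n1 : 'I_n := Ordinal n1p.
Lemma n0v : (n0 : nat) = 0%N. Proof. by []. Qed.
Lemma n1v : (n1 : nat) = 1%N. Proof. by []. Qed.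

Definition lam (i : 'I_n) (k : 'I_a) : F := w ^+ ((i - 2 + k) %% a).
Definition pav (i : 'I_n) (k : 'I_a) : F := if (i == 1 :> nat) then 0 else 1.
Definition pbv (i : 'I_n) (k : 'I_a) : F :=
  if (i == 0 :> nat) then 0 else if (i == 1 :> nat) then 1 else lam i k.

Lemma a0 : (0 < a)%N. Proof. lia. Qed.

Lemma lam_neq0 i k : lam i k != 0.
Proof. by rewrite /lam expf_neq0. Qed.

Lemma w_neq1 d : (0 < d < a)%N -> w ^+ d != 1.
Proof.
move=> /andP[d0 da]; apply/eqP; rewrite -(expr0 w) => /winj.
by move=> h; have := h (ltnW da) (leq0n _); lia.
Qed.

Lemma wa_neq1 : w ^+ a != 1.
Proof.
apply/eqP; rewrite -(expr0 w) => /winj.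
by move=> h; have := h (leqnn _) (leq0n _); lia.
Qed.

Section B2.
Variable g : 'I_n.
Hypothesis g2 : (2 <= g)%N.

Definition H2 := ~: [set n1; g].
Definition Zf (h : 'I_n) (k : 'I_a) : F := lam g k / (pbv h k - lam g k).
Definition sk (k : 'I_a) : nat := ((g - 2 + k) %% a)%N.

Lemma Ind_span d : (d <= a)%N ->
  inspan H2 Zf (fun k => ((a <= sk k + d)%N)%:R).
Proof.
move=> da.
have n0H : n0 \in H2.
  rewrite !inE -!val_eqE /= ?n0v ?n1v; apply/negP => /eqP h; lia.
have Z0 k : Zf n0 k = -1.
  rewrite /Zf /pbv ?n0v eqxx sub0r invrN mulrN divff ?lam_neq0 //.
have [->|dlt] : d = a \/ (d < a)%N by lia.
  apply: (@inspan_ext _ _ _ _ _ _ (fun k => -1 * Zf n0 k)); last first.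
    by apply: inspanZ; apply: inspan_gen.
  move=> k; rewrite Z0 mulN1r opprK.
  by rewrite (_ : (a <= sk k + a)%N = true) //; lia.
case: (posnP d) => [->|d0].
  apply: (@inspan_ext _ _ _ _ _ _ (fun _ => 0)); last exact: inspan0.
  move=> k; have := ltn_pmod (g - 2 + k) a0; rewrite -/(sk k) => lt.
  by have -> : (a <= sk k + 0)%N = false by lia.
pose t := (a - d)%N.
pose A := (w ^+ d - 1)^-1.
pose B := w ^+ t / (1 - w ^+ t).
have wd1 : w ^+ d - 1 != 0 by rewrite subr_eq0 w_neq1 //; lia.
have wt1 : 1 - w ^+ t != 0 by rewrite subr_eq0 eq_sym w_neq1 // /t; lia.
have BA : B - A != 0.
  have -> : B - A = (1 - w ^+ a) / ((1 - w ^+ t) * (1 - w ^+ d)).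
    have -> : w ^+ a = w ^+ t * w ^+ d by rewrite -exprD /t subnK.
    rewrite /B /A; move: wd1 wt1; set x := w ^+ d; set y := w ^+ t => h1 h2.
    have h3 : 1 - x != 0 by rewrite subr_eq0 eq_sym -subr_eq0.
    by field; rewrite h1 h2 h3.
  rewrite mulf_neq0 // ?invr_eq0 ?mulf_neq0 //.
    by rewrite subr_eq0 eq_sym wa_neq1.
  by rewrite subr_eq0 eq_sym w_neq1 //; lia.
have ih : ((g - 2 + d) %% a + 2 < n)%N by have := ltn_pmod (g - 2 + d) a0; lia.
pose i : 'I_n := Ordinal ih.
have iv : (i : nat) = ((g - 2 + d) %% a + 2)%N by [].
have iH : i \in H2.
  rewrite !inE -!val_eqE /= ?iv ?n1v negb_or; apply/andP; split; first by apply/eqP; lia.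
  apply/eqP => e.
  have gl : (g - 2 < a)%N by have := ltn_ord g; lia.
  have : ((g - 2 + d) %% a = (g - 2 + 0) %% a)%N by rewrite addn0 (modn_small gl); lia.
  move/eqP; rewrite eqn_modDl !modn_small //; lia.
have Zi k : Zf i k = if (sk k + d < a)%N then A else B.
  have sa : (sk k < a)%N by apply: ltn_pmod; exact: a0.
  have lg : lam g k = w ^+ sk k by [].
  have li : lam i k = w ^+ ((sk k + d) %% a).
    rewrite /lam iv /sk; congr (w ^+ _).
    have -> : ((g - 2 + d) %% a + 2 - 2 = (g - 2 + d) %% a)%N by lia.
    by rewrite modnDml modnDml addnAC.
  rewrite /Zf /pbv iv.
  have -> : ((g - 2 + d) %% a + 2 == 0)%N = false by lia.
  have -> : ((g - 2 + d) %% a + 2 == 1)%N = false by lia.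
  rewrite li lg.
  have ws : w ^+ sk k != 0 by rewrite expf_neq0.
  case: ltnP => hlt.
    rewrite modn_small // exprD /A.
    move: ws wd1; set x := w ^+ sk k; set y := w ^+ d => h1 h2.
    field; by rewrite h2 /= -{2}(mulr1 x) -mulrBr mulf_neq0.
  have -> : ((sk k + d) %% a = sk k + d - a)%N.
    rewrite -{1}(subnK hlt) modnDr modn_small //; lia.
  have -> : w ^+ sk k = w ^+ (sk k + d - a) * w ^+ t.
    by rewrite -exprD /t; congr (w ^+ _); lia.
  have we : w ^+ (sk k + d - a) != 0 by rewrite expf_neq0.
  rewrite /B; move: we wt1; set x := w ^+ (sk k + d - a); set y := w ^+ t => h1 h2.
  field; by rewrite h2 /= -{1}(mulr1 x) -mulrBr mulf_neq0.

apply: (@inspan_ext _ _ _ _ _ _ (fun k => (B - A)^-1 * (Zf i k - A * (-1 * Zf n0 k)))); last first.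
  apply: inspanZ; apply: inspanB; first exact: inspan_gen.
  by apply: inspanZ; apply: inspanZ; apply: inspan_gen.
move=> k; rewrite Z0 Zi mulN1r opprK.
case: ltnP => h.
  by rewrite mulr1 subrr mulr0.
by rewrite mulr1 mulVf.
Qed.

Lemma B2 : full H2 Zf.
Proof.
apply: full_delta => k0.
pose mm := sk k0.
have mma : (mm < a)%N by apply: ltn_pmod; exact: a0.
apply: (@inspan_ext _ _ _ _ _ _ (fun k => ((a <= sk k + (a - mm))%N)%:R
                                       - ((a <= sk k + (a - mm - 1))%N)%:R)); last first.
  apply: inspanB; apply: Ind_span; first exact: leq_subr.
  by rewrite -subnDA leq_subr.
move=> k.
have ska : (sk k < a)%N by apply: ltn_pmod; exact: a0.
have E1 : (a <= sk k + (a - mm))%N = (mm <= sk k)%N by apply/idP/idP => H; lia.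
have E2 : (a <= sk k + (a - mm - 1))%N = (mm < sk k)%N by apply/idP/idP => H; lia.
rewrite E1 E2.
have E3 : (k == k0) = (sk k == mm).
  apply/idP/idP => [/eqP -> //|].
  rewrite /mm /sk eqn_modDl !modn_small // => /eqP /val_inj ->.
rewrite E3; case: (ltngtP (sk k) mm) => h.
- by rewrite subrr.
- by rewrite subrr.
- by rewrite subr0.
Qed.
End B2.

Lemma inspan_g1 (H : {set 'I_n}) (Phi : 'I_n -> 'I_a -> F) v h c :
  h \in H -> (forall k, v k = c * Phi h k) -> inspan H Phi v.
Proof.
move=> hH e; apply: (@inspan_ext _ _ _ _ _ _ (fun k => c * Phi h k)) => //.
by apply: inspanZ; apply: inspan_gen.
Qed.

Lemma inspan_g2 (H : {set 'I_n}) (Phi : 'I_n -> 'I_a -> F) v h1 h2 c1 c2 :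
  h1 \in H -> h2 \in H -> (forall k, v k = c1 * Phi h1 k + c2 * Phi h2 k) -> inspan H Phi v.
Proof.
move=> h1H h2H e; apply: (@inspan_ext _ _ _ _ _ _ (fun k => c1 * Phi h1 k + c2 * Phi h2 k)) => //.
by apply: inspanD; apply: inspanZ; apply: inspan_gen.
Qed.

Lemma node_cases (u : 'I_n) : [\/ u = n0, u = n1 | (2 <= u)%N].
Proof.
case: u => [[|[|x]] hx].
- by apply: Or31; apply: val_inj => /=; rewrite ?n0v.
- by apply: Or32; apply: val_inj => /=; rewrite ?n1v.
- by apply: Or33.
Qed.

Lemma n01 : n0 != n1.
Proof. by rewrite -val_eqE /= ?n0v ?n1v. Qed.
Lemma Rn0 (u : 'I_n) : (2 <= u)%N -> u != n0.
Proof. by move=> h; rewrite -val_eqE /= ?n0v; apply/eqP; lia. Qed.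
Lemma Rn1 (u : 'I_n) : (2 <= u)%N -> u != n1.
Proof. by move=> h; rewrite -val_eqE /= ?n1v; apply/eqP; lia. Qed.

Lemma pav0 k : pav n0 k = 1. Proof. by rewrite /pav ?n0v. Qed.
Lemma pbv0 k : pbv n0 k = 0. Proof. by rewrite /pbv ?n0v. Qed.
Lemma pav1 k : pav n1 k = 0. Proof. by rewrite /pav ?n1v. Qed.
Lemma pbv1 k : pbv n1 k = 1. Proof. by rewrite /pbv ?n1v. Qed.
Lemma pavR (u : 'I_n) k : (2 <= u)%N -> pav u k = 1.
Proof. by move=> h; rewrite /pav (_ : (u == 1 :> nat) = false) //; apply/eqP; lia. Qed.
Lemma pbvR (u : 'I_n) k : (2 <= u)%N -> pbv u k = lam u k.
Proof.
move=> h; rewrite /pbv (_ : (u == 0 :> nat) = false); last by apply/eqP; lia.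
by rewrite (_ : (u == 1 :> nat) = false) //; apply/eqP; lia.
Qed.

Lemma lam_inj (u v : 'I_n) k : (2 <= u)%N -> (2 <= v)%N -> u != v -> lam u k != lam v k.
Proof.
move=> hu hv uv; apply/eqP => /winj.
have ha := ltn_pmod (u - 2 + k) a0; have hb := ltn_pmod (v - 2 + k) a0.
move=> /(_ (ltnW ha) (ltnW hb)) /eqP; rewrite eqn_modDr.
have := ltn_ord u; have := ltn_ord v => lu lv.
rewrite !modn_small; try lia.
move=> /eqP e; move: uv => /eqP; apply; apply: val_inj => /=; lia.
Qed.

Lemma lamB_neq0 (u v : 'I_n) k : (2 <= u)%N -> (2 <= v)%N -> u != v -> lam u k - lam v k != 0.
Proof. by move=> hu hv uv; rewrite subr_eq0 lam_inj. Qed.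

Lemma dtP_code (u v : 'I_n) k : u != v -> dt pav pbv u v k != 0.
Proof.
rewrite /dt.
case: (node_cases u) => [->|->|hu]; case: (node_cases v) => [->|->|hv];
  rewrite ?eqxx // => uv;
  rewrite ?pav0 ?pbv0 ?pav1 ?pbv1 ?pavR ?pbvR //.
- by rewrite !mulr1 !mulr0 subr0 oner_eq0.
- by rewrite mul1r mul0r subr0 lam_neq0.
- by rewrite !mul0r !mulr1 sub0r oppr_eq0 oner_eq0.
- by rewrite !mul0r mul1r sub0r oppr_eq0 oner_eq0.
- by rewrite mulr0 mulr1 sub0r oppr_eq0 lam_neq0.
- by rewrite mulr0 !mulr1 subr0 oner_eq0.
- by rewrite !mul1r !mulr1 lamB_neq0 // eq_sym.
Qed.

Lemma wV_neq1 : (w^-1) ^+ a != 1.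
Proof. by rewrite exprVn invr_eq1 wa_neq1. Qed.

Lemma PhiV i k : Phi1 w^-1 i k = (lam i k)^-1.
Proof. by rewrite /Phi1 /lam exprVn. Qed.

Lemma inR (u : 'I_n) : (2 <= u)%N -> u \in Rset n.
Proof. by rewrite inE. Qed.

Ltac memb := rewrite !inE ?negb_or; repeat (apply/andP; split);
  try (by rewrite eq_sym; apply: Rn0); try (by rewrite eq_sym; apply: Rn1);
  try (by apply: Rn0); try (by apply: Rn1);
  try (by rewrite eq_sym n01); try (by rewrite n01); try done;
  try (by rewrite eq_sym).

Lemma fullA : full (~: [set n0; n1]) (Xv pav pbv n0 n1).
Proof.
apply: (full_sub (B1 a0 wa_neq1)) => i; rewrite inE => iR.
apply: (inspan_g1 (h := i) (c := 1)); first by memb.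
move=> k; rewrite /Xv /dt pav0 pbv0 pav1 pbv1 pavR // pbvR //.
by rewrite /Phi1 -/(lam i k) !mul1r !mul0r !mulr0 !subr0 divr1.
Qed.

Lemma fullB : full (~: [set n1; n0]) (Xv pav pbv n1 n0).
Proof.
apply: (full_sub (B1 a0 wV_neq1)) => i; rewrite inE => iR.
apply: (inspan_g1 (h := i) (c := 1)); first by memb.
move=> k; rewrite /Xv /dt pav0 pbv0 pav1 pbv1 pavR // pbvR // PhiV.
have := lam_neq0 i k; set L := lam i k => hL.
by field; rewrite oppr_eq0 hL.
Qed.

Ltac fld := field; repeat (apply/andP; split); rewrite ?oppr_eq0 ?oner_eq0 //.

Lemma fullC (g : 'I_n) : (2 <= g)%N -> full (~: [set n0; g]) (Xv pav pbv n0 g).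
Proof.
move=> g2; apply: (full_sub (B2 g2)) => h; rewrite /H2 => hH.
have Lg := lam_neq0 g.
case: (node_cases h) => [->|eh|hR].
- apply: (inspan_g1 (h := n1) (c := 1)); first by memb.
  move=> k; rewrite /Zf /Xv /dt pav0 pbv0 pav1 pbv1 pavR // pbvR //.
  have := Lg k; set L := lam g k => hL.
  by field; rewrite !oppr_eq0 oner_eq0 hL.
- by move: hH; rewrite eh !inE eqxx.
have hg : h != g by move: hH; rewrite !inE negb_or => /andP[_].
apply: (inspan_g2 (h1 := n1) (h2 := h) (c1 := 1) (c2 := -1)); [by memb | by memb |].
move=> k; rewrite /Zf /Xv /dt ?pav0 ?pbv0 ?pav1 ?pbv1 !pavR // !pbvR //.
have := Lg k; have := lamB_neq0 k hR g2 hg; have gh : g != h by rewrite eq_sym.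
have := lamB_neq0 k g2 hR gh.
set L := lam g k; set M := lam h k => h1 h2 h3.
by fld.
Qed.

Lemma fullD (f : 'I_n) : (2 <= f)%N -> full (~: [set f; n0]) (Xv pav pbv f n0).
Proof.
move=> f2.
apply: (full_sub (full_diag (D := lam f) (B1 a0 wV_neq1) (lam_neq0 f))) => i.
rewrite inE => iR.
have n1H : n1 \in ~: [set f; n0] by memb.
case: (eqVneq i f) => [->|ifn].
- apply: (inspan_g1 (h := n1) (c := -1)) => // k.
  rewrite PhiV /Xv /dt ?pav0 ?pbv0 ?pav1 ?pbv1 !pavR // !pbvR //.
  have := lam_neq0 f k; set L := lam f k => h1.
  by fld.
- apply: (inspan_g2 (h1 := i) (h2 := n1) (c1 := 1) (c2 := -1)) => //; first by memb.
  move=> k; rewrite PhiV /Xv /dt ?pav0 ?pbv0 ?pav1 ?pbv1 !pavR // !pbvR //.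
  have := lam_neq0 f k; have := lam_neq0 i k.
  set L := lam f k; set M := lam i k => h1 h2.
  by fld.
Qed.

Lemma fullE (g : 'I_n) : (2 <= g)%N -> full (~: [set n1; g]) (Xv pav pbv n1 g).
Proof.
move=> g2.
apply: (full_ext _ (full_diag (D := fun k => (lam g k)^-1) (B2 g2) _)); last first.
  by move=> k; rewrite invr_neq0 // lam_neq0.
move=> h k hH.
have Lg := lam_neq0 g k.
case: (node_cases h) => [->|eh|hR].
- rewrite /Zf /Xv /dt ?pav0 ?pbv0 ?pav1 ?pbv1 !pavR // !pbvR //.
  move: Lg; set L := lam g k => h1.
  by fld.
- by move: hH; rewrite eh !inE eqxx.
have hg : h != g by move: hH; rewrite !inE negb_or => /andP[_].
have gh : g != h by rewrite eq_sym.
rewrite /Zf /Xv /dt ?pav0 ?pbv0 ?pav1 ?pbv1 !pavR // !pbvR //.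
move: Lg (lamB_neq0 k hR g2 hg) (lamB_neq0 k g2 hR gh).
set L := lam g k; set M := lam h k => h1 h2 h3.
by fld.
Qed.

Lemma fullF (f : 'I_n) : (2 <= f)%N -> full (~: [set f; n1]) (Xv pav pbv f n1).
Proof.
move=> f2.
apply: (full_sub (B1 a0 wa_neq1)) => i; rewrite inE => iR.
have n0H : n0 \in ~: [set f; n1] by memb.
case: (eqVneq i f) => [->|ifn].
- apply: (inspan_g1 (h := n0) (c := -1)) => // k.
  rewrite /Phi1 -/(lam f k) /Xv /dt ?pav0 ?pbv0 ?pav1 ?pbv1 !pavR // !pbvR //.
  set L := lam f k.
  by fld.
- apply: (inspan_g2 (h1 := i) (h2 := n0) (c1 := 1) (c2 := -1)) => //; first by memb.
  move=> k; rewrite /Phi1 -/(lam i k) /Xv /dt ?pav0 ?pbv0 ?pav1 ?pbv1 !pavR // !pbvR //.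
  set L := lam f k; set M := lam i k.
  by fld.
Qed.

Lemma fullG (f g : 'I_n) : (2 <= f)%N -> (2 <= g)%N -> f != g ->
  full (~: [set f; g]) (Xv pav pbv f g).
Proof.
move=> f2 g2 fg.
have gf : g != f by rewrite eq_sym.
pose D k := (lam g k - lam f k) / lam g k.
have Dnz k : D k != 0.
  by rewrite /D mulf_neq0 ?invr_neq0 ?lam_neq0 ?lamB_neq0.
apply: (full_sub (full_diag (D := D) (B2 g2) Dnz)) => h; rewrite /H2 => hH.
have n1H : n1 \in ~: [set f; g] by memb.
have n0H : n0 \in ~: [set f; g] by memb.
case: (node_cases h) => [->|eh|hR].
- apply: (inspan_g2 (h1 := n1) (h2 := n0) (c1 := 1) (c2 := -1)) => // k.
  rewrite /D /Zf /Xv /dt ?pav0 ?pbv0 ?pav1 ?pbv1 !pavR // !pbvR //.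
  move: (lam_neq0 g k) (lamB_neq0 k g2 f2 gf).
  set L := lam g k; set M := lam f k => h1 h2.
  by fld.
- by move: hH; rewrite eh !inE eqxx.
have hg : h != g by move: hH; rewrite !inE negb_or => /andP[_].
have gh : g != h by rewrite eq_sym.
case: (eqVneq h f) => [->|hf].
- apply: (inspan_g1 (h := n1) (c := 1)) => // k.
  rewrite /D /Zf /Xv /dt ?pav0 ?pbv0 ?pav1 ?pbv1 !pavR // !pbvR //.
  move: (lam_neq0 g k) (lamB_neq0 k g2 f2 gf) (lamB_neq0 k f2 g2 fg).
  set L := lam g k; set M := lam f k => h1 h2 h3.
  by fld.
have fh : f != h by rewrite eq_sym.
apply: (inspan_g2 (h1 := n1) (h2 := h) (c1 := 1) (c2 := -1)) => //; first by memb.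
move=> k; rewrite /D /Zf /Xv /dt ?pav0 ?pbv0 ?pav1 ?pbv1 !pavR // !pbvR //.
move: (lam_neq0 g k) (lamB_neq0 k g2 f2 gf) (lamB_neq0 k hR g2 hg) (lamB_neq0 k g2 hR gh).
set L := lam g k; set M := lam f k; set Q := lam h k => h1 h2 h3 h4.
by fld.
Qed.

Lemma fullX_code (f g : 'I_n) : f != g -> full (~: [set f; g]) (Xv pav pbv f g).
Proof.
case: (node_cases f) => [->|->|f2]; case: (node_cases g) => [->|->|g2];
  rewrite ?eqxx // => fg.
- exact: fullA.
- exact: fullC.
- exact: fullB.
- exact: fullE.
- exact: fullD.
- exact: fullF.
- exact: fullG.
Qed.

Lemma fullY_code (f g : 'I_n) : f != g -> full (~: [set f; g]) (Yv pav pbv f g).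
Proof.
move=> fg; have gf : g != f by rewrite eq_sym.
have := fullX_code gf; rewrite [[set g; f]]setUC => H.
apply: full_ext H => h k _.
have e1 : dt pav pbv g h k = - dt pav pbv h g k by rewrite /dt; ring.
have e2 : dt pav pbv h f k = - dt pav pbv f h k by rewrite /dt; ring.
by rewrite /Xv /Yv e1 e2 invrN mulrNN.
Qed.

Definition Gc := Gm pav pbv.

Lemma adrc_Gc (i : 'I_n) : adrc_node (n := n) w i = Gc i.
Proof.
rewrite /adrc_node /Gc /Gm.
case: (node_cases i) => [->|->|i2].
- rewrite ?n0v eqxx; congr col_mx; apply/matrixP => r c; rewrite !mxE ?pav0 ?pbv0 //.
  by rewrite mul0rn.
- rewrite ?n1v /=; congr col_mx; apply/matrixP => r c; rewrite !mxE ?pav1 ?pbv1 //.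
  by rewrite mul0rn.
rewrite (_ : (i == 0 :> nat) = false); last by apply/eqP; lia.
rewrite (_ : (i == 1 :> nat) = false); last by apply/eqP; lia.
congr col_mx; apply/matrixP => r c; rewrite !mxE ?pavR ?pbvR //.
Qed.

Lemma mds_code : mds_property (adrc_node (n := n) w) 2.
Proof.
move=> S hS x y hxy; apply: (mds_Gm dtP_code hS) => i iS.
by move: (hxy i iS); rewrite !adrc_Gc.
Qed.

Lemma rep2_code (T : {set 'I_n}) : #|T| = 2%N -> coord_repairable (adrc_node w) T.
Proof.
move=> /eqP /cards2P [f [g [fg ->]]].
apply: (cr_ext adrc_Gc).
have cH : #|~: [set f; g]| = a.
  have := cardsC [set f; g]; rewrite cards2 fg card_ord; lia.
have /card_gt0P [p pH] : (0 < #|~: [set f; g]|)%N by rewrite cH; lia.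
have : (0 < #|~: [set f; g] :\ p|)%N.
  have := cardsD1 p (~: [set f; g]); rewrite pH cH; lia.
move=> /card_gt0P [q]; rewrite !inE => /andP[qp qH'].
have qH : q \in ~: [set f; g] by rewrite !inE.
have pq : p != q by rewrite eq_sym.
exact: (pair_repair dtP_code fg pH qH pq (fullX_code fg) (fullY_code fg)).
Qed.

Lemma rep1_code (T : {set 'I_n}) : #|T| = 1%N -> coord_repairable (adrc_node w) T.
Proof.
move=> /eqP /cards1P [f ->].
apply: (cr_ext adrc_Gc).
pose g := if f == n0 then n1 else n0.
have fg : f != g.
  rewrite /g; case: (eqVneq f n0) => [->|//]; exact: n01.
exact: (single_repair dtP_code fg (fullY_code fg)).
Qed.

End Code.

Unset Implicit Arguments.

Theorem theorem2 (n : nat) : (5 <= n)%N ->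
  exists (F : finFieldType) (w : F),
    [/\ (n - 2 <= #|F|.-1)%N,
        (#|F|.-1).-primitive_root w,
        mds_property (adrc_node (n := n) w) 2,
        (forall T : {set 'I_n}, #|T| = 2%N -> coord_repairable (adrc_node w) T)
      & (forall T : {set 'I_n}, #|T| = 1%N -> coord_repairable (adrc_node w) T)].
Proof.
move=> n5.
have [p np pp] := prime_above n.
pose F : finFieldType := 'F_p.
have cF : #|F| = p := card_Fp pp.
have hp : has (#|F|.-1).-primitive_root (enum [set~ (0 : F)]).
  apply: cyclic.has_prim_root.
  - by rewrite cF; lia.
  - apply/allP => x; rewrite mem_enum !inE => x0; rewrite unity_rootE; apply/eqP.
    have e : x ^+ #|F| = x := expf_card x.
    have Fs : #|F| = (#|F|.-1).+1 by rewrite cF; lia.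
    move: e; rewrite {1}Fs exprSr => e; apply: (mulIf x0); by rewrite e mul1r.
  - exact: enum_uniq.
  - by rewrite -cardE cardsC1.
move/hasP: hp => [w _ wprim].
have Np : #|F|.-1 = p.-1 by rewrite cF.
have a2 : (2 <= n - 2)%N by lia.
have w0 : w != 0.
  apply/negP => /eqP w0; have := prim_expr_order wprim; rewrite w0 expr0n.
  rewrite Np (_ : (p.-1 == 0)%N = false); last by lia.
  by move/eqP; rewrite eq_sym oner_eq0.
have winj : forall e e', (e <= n - 2)%N -> (e' <= n - 2)%N -> w ^+ e = w ^+ e' -> e = e'.
  move=> e e' he he' /eqP; rewrite (eq_prim_root_expr wprim) Np !modn_small; try lia.
exists F, w; split.
- rewrite Np; lia.
- exact: wprim.
- exact: (mds_code a2 w0 winj).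
- exact: (rep2_code a2 w0 winj).
- exact: (rep1_code a2 w0 winj).
Qed.
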